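(* For every $d=1,\dots,\mathbf d-1$ and all $m,n\in\mathcal M$, the function $y_d\mapsto\mathcal V^n_{d+1}(x,y_d,b^{mn}_{d+1})$ (with $x$ and $b^{mn}_{d+1}$ fixed) is convex.
   Context: Let $\mathbf d\ge2$, $\mathcal M$ a finite set of states, $\Omega$ a finite set of scenarios with $\pi^\omega=1/|\Omega|$; $\pi^{lm}_d\ge0$ with $\sum_m\pi^{lm}_d=1$. For each $d$: cost vector $c_d$, matrices $A_d,C_d$, a bilinear map $(x,b)\mapsto x^\top B_db$ into the right-hand-side space, and a set $\mathcal Y_d$, given by linear constraints (possibly linking scenarios), of decisions $y_d=(y^\omega_d)_{\omega\in\Omega}$. Data vectors $b^{lm\omega}_d$; write $b^{lm}_d=(b^{lm\omega}_d)_{\omega\in\Omega}$. Define $\mathcal V^m_{\mathbf d}(x,y_{\mathbf d-1},b^{lm}_{\mathbf d})=\min_{y_{\mathbf d}\in\mathcal Y_{\mathbf d}}\sum_\omega\pi^\omega c_{\mathbf d}^\top y^\omega_{\mathbf d}$ s.t. $A_{\mathbf d}y^\omega_{\mathbf d}\le x^\top B_{\mathbf d}b^{lm\omega}_{\mathbf d}+C_{\mathbf d}y_{\mathbf d-1}$ for all $\omega$, and for $2\le d\le\mathbf d-1$, $\mathcal V^m_d(x,y_{d-1},b^{lm}_d)=\min_{y_d\in\mathcal Y_d}\sum_\omega\pi^\omega\big(c_d^\top y^\omega_d+\sum_n\pi^{mn}_{d+1}\mathcal V^n_{d+1}(x,y^\omega_d,b^{mn}_{d+1})\big)$ s.t.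 $A_dy^\omega_d\le x^\top B_db^{lm\omega}_d+C_dy_{d-1}$ for all $\omega$ (the argument $y_{d-1}$ is a single-scenario vector). Standing assumption: relatively complete recourse (all these problems feasible with finite optimal value for all arguments considered). *)

(* Defs.v *)
From HB Require Import structures.
From mathcomp Require Import all_boot all_order all_algebra.
From mathcomp Require Import boolp classical_sets reals.
Unset Printing Implicit Defensive.
Import Order.TTheory GRing.Theory Num.Theory.
Local Open Scope ring_scope.
Local Open Scope classical_set_scope.

(* Stages are indexed by d : nat.
   - x lives in R^p (column vectors 'cV_p);
   - y^omega_d lives in R^(ny d);
   - right-hand sides of stage d live in R^(nr d);
   - data vectors b^{lm omega}_d live in R^(nb d);
   - Y_d is the polyhedron { y = (y^omega)_omega | \sum_omega G d omega *m y^omega <= h d }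
     (nY d linear inequalities, possibly linking scenarios; equalities are
     encoded as pairs of inequalities);
   - the bilinear map (x,b) |-> x^T B_d b has i-th component x^T (B d i) b;
   - ppi d l m = pi^{lm}_d ;  bdat d l m omega = b^{lm omega}_d. *)
Record msdata (R : realType) (M Omega : finType) := MSData {
  p : nat;
  ny : nat -> nat;
  nr : nat -> nat;
  nb : nat -> nat;
  nY : nat -> nat;
  cc : forall d, 'cV[R]_(ny d);
  AA : forall d, 'M[R]_(nr d, ny d);
  CC : forall d, 'M[R]_(nr d, ny d.-1);
  BB : forall d, 'I_(nr d) -> 'M[R]_(p, nb d);
  GG : forall d, Omega -> 'M[R]_(nY d, ny d);
  hh : forall d, 'cV[R]_(nY d);
  ppi : nat -> M -> M -> R;
  bdat : forall d, M -> M -> Omega -> 'cV[R]_(nb d)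
}.

Arguments p {R M Omega} S : rename.
Arguments ny {R M Omega} S d : rename.
Arguments nr {R M Omega} S d : rename.
Arguments nb {R M Omega} S d : rename.
Arguments nY {R M Omega} S d : rename.
Arguments cc {R M Omega} S d : rename.
Arguments AA {R M Omega} S d : rename.
Arguments CC {R M Omega} S d : rename.
Arguments BB {R M Omega} S d i : rename.
Arguments GG {R M Omega} S d w : rename.
Arguments hh {R M Omega} S d : rename.
Arguments ppi {R M Omega} S d l m : rename.
Arguments bdat {R M Omega} S d l m w : rename.

Definition mxle {R : realType} {m n} (u v : 'M[R]_(m, n)) : Prop :=
  forall i j, u i j <= v i j.

Section Defs.
Variables (R : realType) (M Omega : finType) (S : msdata R M Omega).

Definition bilin d (x : 'cV[R]_(p S)) (b : 'cV[R]_(nb S d)) : 'cV[R]_(nr S d) :=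
  \col_i ((x^T *m BB S d i *m b) 0 0).

Definition inY d (y : Omega -> 'cV[R]_(ny S d)) : Prop :=
  mxle (\sum_(w : Omega) GG S d w *m y w) (hh S d).

Definition feas d (x : 'cV[R]_(p S)) (yprev : 'cV[R]_(ny S d.-1))
  (b : Omega -> 'cV[R]_(nb S d)) : set (Omega -> 'cV[R]_(ny S d)) :=
  [set y | inY d y /\
     forall w, mxle (AA S d *m y w) (bilin d x (b w) + CC S d *m yprev)].

Definition piw : R := (#|Omega|%:R)^-1.

(* Vset k d m x yprev b = set of objective values of the stage-d problem
   for state m, when d is k stages before the last one. *)
Fixpoint Vset (k d : nat) (m : M) (x : 'cV[R]_(p S))
  (yprev : 'cV[R]_(ny S d.-1)) (b : Omega -> 'cV[R]_(nb S d)) {struct k}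
  : set R :=
  match k with
  | 0 => [set \sum_(w : Omega) piw * ((cc S d)^T *m y w) 0 0 | y in feas d x yprev b]
  | k'.+1 =>
      [set \sum_(w : Omega) piw * (((cc S d)^T *m y w) 0 0
            + \sum_(n : M) ppi S d.+1 m n
                * inf (Vset k' d.+1 n x (y w) (bdat S d.+1 m n)))
       | y in feas d x yprev b]
  end.

(* V^m_d(x, y_{d-1}, b) for the horizon D (= bold d), 2 <= d <= D *)
Definition V (D d : nat) (m : M) (x : 'cV[R]_(p S))
  (yprev : 'cV[R]_(ny S d.-1)) (b : Omega -> 'cV[R]_(nb S d)) : R :=
  inf (Vset (D - d) d m x yprev b).

End Defs.

Arguments bilin {R M Omega} S d x b.
Arguments inY {R M Omega} S d y.
Arguments feas {R M Omega} S d x yprev b.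
Arguments piw {R} Omega.
Arguments Vset {R M Omega} S k d m x yprev b.
Arguments V {R M Omega} S D d m x yprev b.

(* Main.v *)
Require Import Defs.
From HB Require Import structures.
From mathcomp Require Import all_boot all_order all_algebra.
From mathcomp Require Import boolp classical_sets reals.
Import Order.TTheory GRing.Theory Num.Theory.
Local Open Scope ring_scope.
Local Open Scope classical_set_scope.

Lemma inf_comb (R : realType) (S0 S1 S2 : set R) (t : R) :
  0 <= t <= 1 -> has_lbound S0 ->
  S1 !=set0 -> has_lbound S1 -> S2 !=set0 -> has_lbound S2 ->
  (forall a1 a2, S1 a1 -> S2 a2 -> exists2 a, S0 a & a <= t * a1 + (1 - t) * a2) ->
  inf S0 <= t * inf S1 + (1 - t) * inf S2.
Proof.
move=> /andP[t0 t1] lb0 ne1 lb1 ne2 lb2 H.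
apply/ler_addgt0Pr => e e0.
have [a1 S1a1 a1lt] := inf_adherent e0 (conj ne1 lb1).
have [a2 S2a2 a2lt] := inf_adherent e0 (conj ne2 lb2).
have [a S0a ale] := H _ _ S1a1 S2a2.
have t0' : 0 <= 1 - t by rewrite subr_ge0.
apply: (le_trans (ge_inf lb0 S0a)); apply: (le_trans ale).
have h1 : t * a1 <= t * (inf S1 + e) by rewrite ler_wpM2l // ltW.
have h2 : (1 - t) * a2 <= (1 - t) * (inf S2 + e) by rewrite ler_wpM2l // ltW.
apply: (le_trans (lerD h1 h2)).
rewrite !mulrDr addrACA -mulrDl subrKC mul1r.
done.
Qed.

Lemma mxle_comb (R : realType) m k (u1 v1 u2 v2 : 'M[R]_(m, k)) (t : R) :
  0 <= t <= 1 -> mxle u1 v1 -> mxle u2 v2 ->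
  mxle (t *: u1 + (1 - t) *: u2) (t *: v1 + (1 - t) *: v2).
Proof.
move=> /andP[t0 t1] h1 h2 i j; rewrite !mxE.
have t0' : 0 <= 1 - t by rewrite subr_ge0.
by apply: lerD; apply: ler_wpM2l.
Qed.

Lemma feas_conv (R : realType) (M Omega : finType) (S : msdata R M Omega)
  d x yp1 yp2 b y1 y2 (t : R) : 0 <= t <= 1 ->
  feas S d x yp1 b y1 -> feas S d x yp2 b y2 ->
  feas S d x (t *: yp1 + (1 - t) *: yp2) b (fun w => t *: y1 w + (1 - t) *: y2 w).
Proof.
move=> ht [iY1 c1] [iY2 c2]; split.
  rewrite /inY.
  have -> : \sum_w GG S d w *m (t *: y1 w + (1 - t) *: y2 w) =
     t *: (\sum_w GG S d w *m y1 w) + (1 - t) *: (\sum_w GG S d w *m y2 w).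
    rewrite !scaler_sumr -big_split; apply: eq_bigr => w _.
    by rewrite mulmxDr !scalemxAr.
  have -> : hh S d = t *: hh S d + (1 - t) *: hh S d.
    by rewrite -scalerDl subrKC scale1r.
  exact: mxle_comb.
move=> w.
rewrite /= mulmxDr -!scalemxAr.
have -> : bilin S d x (b w) + CC S d *m (t *: yp1 + (1 - t) *: yp2) =
   t *: (bilin S d x (b w) + CC S d *m yp1) + (1 - t) *: (bilin S d x (b w) + CC S d *m yp2).
  by rewrite mulmxDr -!scalemxAr !scalerDr addrACA -scalerDl subrKC scale1r.
exact: mxle_comb.
Qed.

Lemma sum_conv (R : realType) (I : finType) (a F G1 G2 : I -> R) (t : R) :
  (forall i, 0 <= a i) -> (forall i, F i <= t * G1 i + (1 - t) * G2 i) ->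
  \sum_i a i * F i <= t * (\sum_i a i * G1 i) + (1 - t) * (\sum_i a i * G2 i).
Proof.
move=> a0 hF; rewrite !mulr_sumr -big_split; apply: ler_sum => i _ /=.
by rewrite mulrCA [(1 - t) * _]mulrCA -mulrDr ler_wpM2l.
Qed.

Lemma lin_comb (R : realType) k (c : 'cV[R]_k) (z1 z2 : 'cV[R]_k) (t : R) :
  (c^T *m (t *: z1 + (1 - t) *: z2)) 0 0 = t * (c^T *m z1) 0 0 + (1 - t) * (c^T *m z2) 0 0.
Proof. by rewrite mulmxDr -!scalemxAr !mxE. Qed.

Lemma piw_ge0 (R : realType) (Omega : finType) : 0 <= piw (R:=R) Omega.
Proof. by rewrite /piw invr_ge0 ler0n. Qed.

Lemma main_ind (R : realType) (M Omega : finType) (S : msdata R M Omega)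
  (D : nat) (x : 'cV[R]_(p S)) :
  (forall d l m, 0 <= ppi S d l m) ->
  (forall d, (2 <= d <= D)%N -> forall (l m : M) (yprev : 'cV[R]_(ny S d.-1)),
     Vset S (D - d) d m x yprev (bdat S d l m) !=set0 /\
     has_lbound (Vset S (D - d) d m x yprev (bdat S d l m))) ->
  forall k d, (2 <= d <= D)%N -> (D - d)%N = k -> forall (l n : M)
    (y1 y2 : 'cV[R]_(ny S d.-1)) (t : R), 0 <= t <= 1 ->
    inf (Vset S k d n x (t *: y1 + (1 - t) *: y2) (bdat S d l n))
    <= t * inf (Vset S k d n x y1 (bdat S d l n))
       + (1 - t) * inf (Vset S k d n x y2 (bdat S d l n)).
Proof.
move=> hp0 hrec k; elim: k => [|k IH] d hd hk l n y1 y2 t ht.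
  have [ne1 lb1] := hrec d hd l n y1; have [ne2 lb2] := hrec d hd l n y2.
  have [_ lb0] := hrec d hd l n (t *: y1 + (1 - t) *: y2).
  rewrite hk in ne1 lb1 ne2 lb2 lb0.
  apply: inf_comb => // a1 a2 [z1 f1 <-] [z2 f2 <-].
  eexists; first by exists (fun w => t *: z1 w + (1 - t) *: z2 w);
    [exact: feas_conv|reflexivity].
  apply: sum_conv => [w|w]; first exact: piw_ge0.
  by rewrite lin_comb.
have [ne1 lb1] := hrec d hd l n y1; have [ne2 lb2] := hrec d hd l n y2.
have [_ lb0] := hrec d hd l n (t *: y1 + (1 - t) *: y2).
rewrite hk in ne1 lb1 ne2 lb2 lb0.
have hd' : (2 <= d.+1 <= D)%N.
  move: hd hk => /andP[h1 h2] hk; apply/andP; split; first exact: leqW.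
  by rewrite ltnNge; apply/negP => hD; move: hk; rewrite (eqP hD).
have hk' : (D - d.+1)%N = k by rewrite subnS hk.
apply: inf_comb => // a1 a2 [z1 f1 <-] [z2 f2 <-].
eexists; first by exists (fun w => t *: z1 w + (1 - t) *: z2 w);
  [exact: feas_conv|reflexivity].
apply: sum_conv => [w|w]; first exact: piw_ge0.
rewrite lin_comb.
have := @sum_conv R M (fun m => ppi S d.+1 n m)
  (fun m => inf (Vset S k d.+1 m x (t *: z1 w + (1 - t) *: z2 w) (bdat S d.+1 n m)))
  (fun m => inf (Vset S k d.+1 m x (z1 w) (bdat S d.+1 n m)))
  (fun m => inf (Vset S k d.+1 m x (z2 w) (bdat S d.+1 n m))) t.
move=> /(_ (hp0 _ _) (fun m => IH d.+1 hd' hk' n m (z1 w) (z2 w) t ht)) H.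
apply: le_trans (lerD (lexx _) H) _.
by rewrite le_eqVlt; apply/orP; left; apply/eqP; rewrite !mulrDr addrACA.
Qed.

Theorem lemma11 (R : realType) (M Omega : finType) (S : msdata R M Omega)
  (D : nat) (x : 'cV[R]_(p S)) :
  (2 <= D)%N ->
  (0 < #|Omega|)%N ->
  (forall d l m, 0 <= ppi S d l m) ->
  (forall d l, \sum_m ppi S d l m = 1) ->
  (* relatively complete recourse: every stage problem is feasible with
     finite optimal value *)
  (forall d, (2 <= d <= D)%N -> forall (l m : M) (yprev : 'cV[R]_(ny S d.-1)),
     Vset S (D - d) d m x yprev (bdat S d l m) !=set0 /\
     has_lbound (Vset S (D - d) d m x yprev (bdat S d l m))) ->
  forall d, (1 <= d <= D - 1)%N -> forall m n : M,
  forall (y1 y2 : 'cV[R]_(ny S d)) (t : R), 0 <= t <= 1 ->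
    V S D d.+1 n x (t *: y1 + (1 - t) *: y2) (bdat S d.+1 m n)
    <= t * V S D d.+1 n x y1 (bdat S d.+1 m n)
       + (1 - t) * V S D d.+1 n x y2 (bdat S d.+1 m n).
Proof.
move=> hD _ hp0 _ hrec d hd m n y1 y2 t ht; rewrite /V.
have hd' : (2 <= d.+1 <= D)%N.
  move: hd hD => /andP[h1 h2] hD; apply/andP; split; first by [].
  by move: h2; rewrite -ltnS; case: (D) hD => [|D'] //; rewrite subn1.
exact: (@main_ind R M Omega S D x hp0 hrec (D - d.+1) d.+1 hd' erefl m n y1 y2 t ht).
Qed.
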